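(* Let $\theta\in[0,1]$, $\Delta t,\Delta x>0$, and $\mathcal A_\theta=I+\theta\Delta tD_+D_+D_-$. For every sequence $a\in\ell^2_\Delta(\mathbb Z)$, $$\|\mathcal A_\theta a\|^2_{\ell^2_\Delta}=\|a\|^2_{\ell^2_\Delta}+\theta\Delta t\Delta x\|D_+D_-(a)\|^2_{\ell^2_\Delta}+\theta^2\Delta t^2\|D_+D_+D_-(a)\|^2_{\ell^2_\Delta}.$$
   Context: For a sequence $a=(a_j)_{j\in\mathbb Z}$: $D_+(a)_j=(a_{j+1}-a_j)/\Delta x$, $D_-(a)_j=(a_j-a_{j-1})/\Delta x$; $\|a\|_{\ell^2_\Delta}=(\Delta x\sum_j a_j^2)^{1/2}$; $I$ is the identity. *)

(* Defs.v *)
From Stdlib Require Import Reals ZArith.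
From Coquelicot Require Import Coquelicot.
Open Scope R_scope.

Definition seqZ := Z -> R.

Definition Dp (dx : R) (a : seqZ) : seqZ := fun j => (a (j + 1)%Z - a j) / dx.
Definition Dm (dx : R) (a : seqZ) : seqZ := fun j => (a j - a (j - 1)%Z) / dx.

(* Two-sided sum over Z of nonnegative terms, via the series over nat
   of f(n) + f(-n-1) (indices 0,1,2,... and -1,-2,...). *)
Definition sqfold (a : seqZ) (n : nat) : R :=
  (a (Z.of_nat n)) ^ 2 + (a (- Z.of_nat n - 1)%Z) ^ 2.

Definition in_l2 (a : seqZ) : Prop := ex_series (sqfold a).

Definition l2norm (dx : R) (a : seqZ) : R := sqrt (dx * Series (sqfold a)).

Definition Atheta (theta dt dx : R) (a : seqZ) : seqZ :=
  fun j => a j + theta * dt * Dp dx (Dp dx (Dm dx a)) j.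

(* Main.v *)
Require Import Defs.
From Stdlib Require Import Reals Lia Lra ZArith.
From Coquelicot Require Import Coquelicot.
Open Scope R_scope.

Definition zs (f : Z -> R) : Prop :=
  ex_series (fun n : nat => Rabs (f (Z.of_nat n))) /\
  ex_series (fun n : nat => Rabs (f (- Z.of_nat n - 1)%Z)).
Definition zsum (f : Z -> R) : R :=
  Series (fun n : nat => f (Z.of_nat n)) + Series (fun n : nat => f (- Z.of_nat n - 1)%Z).

Lemma exs_le (u v : nat -> R) : (forall n, Rabs (u n) <= v n) -> ex_series v -> ex_series u.
Proof. intros H; apply (ex_series_le (K:=R_AbsRing) (V:=R_CompleteNormedModule) u v); intro n; exact (H n). Qed.

Lemma exs_plus (u v : nat -> R) : ex_series u -> ex_series v -> ex_series (fun n => u n + v n).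
Proof. apply (ex_series_plus u v). Qed.

Lemma zs_le f g : (forall j, Rabs (f j) <= Rabs (g j)) -> zs g -> zs f.
Proof.
  intros H [H1 H2]; split.
  - apply exs_le with (2 := H1); intro n; rewrite Rabs_Rabsolu; apply H.
  - apply exs_le with (2 := H2); intro n; rewrite Rabs_Rabsolu; apply H.
Qed.

Lemma zs_lin x y f g : zs f -> zs g -> zs (fun j => x * f j + y * g j).
Proof.
  intros [F1 F2] [G1 G2]; split.
  - apply exs_le with (v := fun n => Rabs x * Rabs (f (Z.of_nat n)) + Rabs y * Rabs (g (Z.of_nat n))).
    + intro n; rewrite Rabs_Rabsolu, <- !Rabs_mult; apply Rabs_triang.
    + apply exs_plus; apply (ex_series_scal_l (V:=R_NormedModule)); assumption.
  - apply exs_le with (v := fun n => Rabs x * Rabs (f (- Z.of_nat n - 1)%Z) + Rabs y * Rabs (g (- Z.of_nat n - 1)%Z)).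
    + intro n; rewrite Rabs_Rabsolu, <- !Rabs_mult; apply Rabs_triang.
    + apply exs_plus; apply (ex_series_scal_l (V:=R_NormedModule)); assumption.
Qed.

Lemma zs_ext f g : (forall j, f j = g j) -> zs f -> zs g.
Proof. intros H; apply zs_le; intro j; rewrite H; lra. Qed.

Lemma zsum_ext f g : (forall j, f j = g j) -> zsum f = zsum g.
Proof. intros H; unfold zsum; rewrite (Series_ext _ (fun n => g (Z.of_nat n))), (Series_ext (fun n => f _) (fun n => g (- Z.of_nat n - 1)%Z)); auto. Qed.

Lemma zsum_lin x y f g : zs f -> zs g -> zsum (fun j => x * f j + y * g j) = x * zsum f + y * zsum g.
Proof.
  intros [F1 F2] [G1 G2]; unfold zsum.
  apply ex_series_Rabs in F1, F2, G1, G2.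
  rewrite !Series_plus, !Series_scal_l; try lra;
  apply (ex_series_scal_l (V:=R_NormedModule)); assumption.
Qed.

Lemma zs_shiftp f : zs f -> zs (fun j => f (j + 1)%Z).
Proof.
  intros [F1 F2]; split.
  - apply ex_series_incr_1 in F1. eapply ex_series_ext; [|exact F1]. intro n; cbv beta; rewrite ?Nat2Z.inj_succ; do 2 f_equal; lia.
  - apply ex_series_incr_1. eapply ex_series_ext; [|exact F2]. intro n; cbv beta; rewrite ?Nat2Z.inj_succ; do 2 f_equal; lia.
Qed.

Lemma zs_shiftm f : zs f -> zs (fun j => f (j - 1)%Z).
Proof.
  intros [F1 F2]; split.
  - apply ex_series_incr_1. eapply ex_series_ext; [|exact F1]. intro n; cbv beta; rewrite ?Nat2Z.inj_succ; do 2 f_equal; lia.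
  - apply ex_series_incr_1 in F2. eapply ex_series_ext; [|exact F2]. intro n; cbv beta; rewrite ?Nat2Z.inj_succ; do 2 f_equal; lia.
Qed.

Lemma zsum_shift f : zs f -> zsum (fun j => f (j + 1)%Z) = zsum f.
Proof.
  intros [F1 F2]. apply ex_series_Rabs in F1, F2. unfold zsum.
  assert (E1 : Series (fun n : nat => f (Z.of_nat n)) = f 0%Z + Series (fun n : nat => f (Z.of_nat n + 1)%Z)).
  { rewrite Series_incr_1 by exact F1. f_equal. apply Series_ext; intro n; f_equal; lia. }
  assert (E0 : ex_series (fun n : nat => f (- Z.of_nat n)%Z)).
  { apply ex_series_incr_1. eapply ex_series_ext; [|exact F2]. intro n; simpl; f_equal; lia. }
  assert (E2 : Series (fun n : nat => f (- Z.of_nat n)%Z) = f 0%Z + Series (fun n : nat => f (- Z.of_nat n - 1)%Z)).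
  { rewrite Series_incr_1 by exact E0. f_equal. apply Series_ext; intro n; f_equal; lia. }
  rewrite (Series_ext (fun n => f (- Z.of_nat n - 1 + 1)%Z) (fun n => f (- Z.of_nat n)%Z)) by (intro n; f_equal; lia).
  lra.
Qed.

Definition Q (f : Z -> R) := zs (fun j => f j * f j).

Lemma zs_mul f g : Q f -> Q g -> zs (fun j => f j * g j).
Proof.
  intros Hf Hg.
  apply zs_le with (g := fun j => /2 * (f j * f j) + /2 * (g j * g j)).
  - intro j. rewrite (Rabs_pos_eq (/2 * (f j * f j) + /2 * (g j * g j))) by nra.
    pose proof (Rle_0_sqr (f j + g j)); pose proof (Rle_0_sqr (f j - g j)); unfold Rsqr in *. apply Rabs_le; split; nra.
  - apply zs_lin; assumption.
Qed.

Lemma Q_lin x y f g : Q f -> Q g -> Q (fun j => x * f j + y * g j).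
Proof.
  intros Hf Hg. unfold Q.
  apply zs_ext with (f := fun j => (x*x) * (f j * f j) + 1 * ((y*y) * (g j * g j) + (2*x*y) * (f j * g j))).
  - intro j; ring.
  - apply zs_lin; [exact Hf|]. apply zs_lin; [exact Hg|]. apply zs_mul; assumption.
Qed.

Lemma Q_shiftp f : Q f -> Q (fun j => f (j + 1)%Z).
Proof. intro H; exact (zs_shiftp _ H). Qed.
Lemma Q_shiftm f : Q f -> Q (fun j => f (j - 1)%Z).
Proof. intro H; exact (zs_shiftm _ H). Qed.
Lemma Q_ext f g : (forall j, f j = g j) -> Q f -> Q g.
Proof. intros H; apply zs_ext; intro j; rewrite H; reflexivity. Qed.

Lemma Q_Dp dx f : 0 < dx -> Q f -> Q (Dp dx f).
Proof.
  intros Hdx H. apply Q_ext with (f := fun j => (/dx) * f (j+1)%Z + (-/dx) * f j).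
  - intro j; unfold Dp; field; lra.
  - apply Q_lin; [apply Q_shiftp|]; assumption.
Qed.
Lemma Q_Dm dx f : 0 < dx -> Q f -> Q (Dm dx f).
Proof.
  intros Hdx H. apply Q_ext with (f := fun j => (/dx) * f j + (-/dx) * f (j-1)%Z).
  - intro j; unfold Dm; field; lra.
  - apply Q_lin; [|apply Q_shiftm]; assumption.
Qed.

Lemma l2_Q a : in_l2 a -> Q a.
Proof.
  intro H; split.
  - apply exs_le with (2 := H). intro n; unfold sqfold; pose proof (Rle_0_sqr (a (Z.of_nat n))); pose proof (Rle_0_sqr (a (-Z.of_nat n -1)%Z)); unfold Rsqr in *; simpl; rewrite Rabs_Rabsolu, Rabs_pos_eq by assumption; rewrite !Rmult_1_r; lra.
  - apply exs_le with (2 := H). intro n; unfold sqfold; pose proof (Rle_0_sqr (a (Z.of_nat n))); pose proof (Rle_0_sqr (a (-Z.of_nat n -1)%Z)); unfold Rsqr in *; simpl; rewrite Rabs_Rabsolu, Rabs_pos_eq by assumption; rewrite !Rmult_1_r; lra.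
Qed.

Lemma l2sq dx f : 0 < dx -> Q f -> l2norm dx f ^ 2 = dx * zsum (fun j => f j * f j).
Proof.
  intros Hdx [H1 H2]. apply ex_series_Rabs in H1, H2.
  assert (E : Series (sqfold f) = zsum (fun j => f j * f j)).
  { unfold zsum. rewrite <- Series_plus by assumption. apply Series_ext; intro n; unfold sqfold; ring. }
  assert (X : ex_series (sqfold f)).
  { eapply ex_series_ext; [|exact (exs_plus _ _ H1 H2)]. intro n; unfold sqfold; simpl; ring. }
  unfold l2norm. rewrite pow2_sqrt, E; [reflexivity|].
  apply Rmult_le_pos; [lra|].
  apply Rle_trans with (Series (fun n => 0 * sqfold f n)).
  - rewrite Series_scal_l; lra.
  - apply Series_le; [|exact X]. intro n; rewrite Rmult_0_l; unfold sqfold; split; [lra|].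
    pose proof (pow2_ge_0 (f (Z.of_nat n))); pose proof (pow2_ge_0 (f (-Z.of_nat n - 1)%Z)); lra.
Qed.

Theorem proposition4 (theta dt dx : R) (a : seqZ) :
  0 <= theta <= 1 -> 0 < dt -> 0 < dx -> in_l2 a ->
  (l2norm dx (Atheta theta dt dx a)) ^ 2 =
    (l2norm dx a) ^ 2
    + theta * dt * dx * (l2norm dx (Dp dx (Dm dx a))) ^ 2
    + theta ^ 2 * dt ^ 2 * (l2norm dx (Dp dx (Dp dx (Dm dx a)))) ^ 2.
Proof.
  intros Ht Hdt Hdx Hl.
  pose proof (l2_Q a Hl) as Qa.
  set (b := Dm dx a). set (c := Dp dx b). set (d := Dp dx c). set (s := theta * dt).
  assert (Qb : Q b) by (apply Q_Dm; assumption).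
  assert (Qc : Q c) by (apply Q_Dp; assumption).
  assert (Qd : Q d) by (apply Q_Dp; assumption).
  assert (QA : Q (Atheta theta dt dx a)).
  { apply Q_ext with (f := fun j => 1 * a j + s * d j).
    - intro j; unfold Atheta; fold b c d s; ring.
    - apply Q_lin; assumption. }
  rewrite !l2sq by assumption.
  pose proof (Q_shiftp b Qb) as Qb1.
  pose proof (Q_shiftp c Qc) as Qc1.
  pose proof (Q_shiftm a Qa) as Qam.
  pose proof (zs_mul _ _ Qb Qb1) as Zbs.
  pose proof (zs_mul _ _ Qb Qc) as Zbc.
  pose proof (zs_mul _ _ Qa Qc) as Zac.
  pose proof (zs_mul _ _ Qa Qd) as Zad.
  pose proof (zs_mul _ _ Qam Qc) as Zamc.
  pose proof (zs_mul _ _ Qa Qc1) as Zac1.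
  pose proof (zs_lin 1 (-2) _ _ Qb Zbs) as Zbbs.
  pose proof (zs_lin (2*s) (s^2) _ _ Zad Qd) as Zads.
  assert (K1 : zsum (fun j => c j * c j) =
     /(dx*dx) * zsum (fun j => b (j+1)%Z * b (j+1)%Z) + /(dx*dx) * zsum (fun j => 1 * (b j * b j) + -2 * (b j * b (j+1)%Z))).
  { rewrite <- zsum_lin by assumption. apply zsum_ext; intro j; unfold c, Dp; field; lra. }
  rewrite zsum_lin in K1 by assumption.
  rewrite (zsum_shift (fun j => b j * b j) Qb) in K1.
  assert (K2 : zsum (fun j => b j * c j) = /dx * zsum (fun j => b j * b (j+1)%Z) + (-/dx) * zsum (fun j => b j * b j)).
  { rewrite <- zsum_lin by assumption. apply zsum_ext; intro j; unfold c, Dp; field; lra. }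
  assert (K3 : zsum (fun j => a j * d j) = /dx * zsum (fun j => a j * c (j+1)%Z) + (-/dx) * zsum (fun j => a j * c j)).
  { rewrite <- zsum_lin by assumption. apply zsum_ext; intro j; unfold d, Dp; field; lra. }
  assert (K4 : zsum (fun j => a j * c (j+1)%Z) = zsum (fun j => 1 * (a j * c j) + (-dx) * (b j * c j))).
  { transitivity (zsum (fun j => a (j + 1 - 1)%Z * c (j + 1)%Z)).
    { apply zsum_ext; intro j. replace (j + 1 - 1)%Z with j by lia. reflexivity. }
    rewrite (zsum_shift (fun j => a (j - 1)%Z * c j) Zamc).
    apply zsum_ext; intro j. unfold b, Dm; field; lra. }
  rewrite zsum_lin in K4 by assumption.
  assert (KA : zsum (fun j => Atheta theta dt dx a j * Atheta theta dt dx a j) =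
     1 * zsum (fun j => a j * a j) + 1 * zsum (fun j => 2*s * (a j * d j) + s^2 * (d j * d j))).
  { rewrite <- zsum_lin by assumption. apply zsum_ext; intro j; unfold Atheta; fold b c d s; ring. }
  rewrite zsum_lin in KA by assumption.
  rewrite KA, K3, K4, K2, K1. unfold s. field. lra.
Qed.
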